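(* Let $\mathcal{H}=(\mathcal{V},\mathcal{E})$ be a PICOD hypergraph and suppose $\mathcal{V}$ is partitioned into the vertex sets $\mathcal{V}_1,\dots,\mathcal{V}_t$ of the connected components $\mathcal{H}_1=\mathcal{H}[\mathcal{V}_1],\dots,\mathcal{H}_t=\mathcal{H}[\mathcal{V}_t]$ of $\mathcal{H}$ (so every edge of $\mathcal{H}$ is contained in exactly one $\mathcal{V}_i$ and $\mathcal{H}=\bigcup_i \mathcal{H}_i$). Then for every prime power $q$, $$\beta_q(\mathcal{H})=\max_{i\in[t]}\beta_q(\mathcal{H}_i).$$
   Context: PICOD problem: a server holds $m$ messages $b_1,\dots,b_m\in\mathbb{F}_q$; there are $n$ clients, client $i$ having side-information $\{b_j: j\in S_i\}$, $S_i\subseteq[m]$, and request-set $R_i=[m]\setminus S_i$ (assumed non-empty); client $i$ wants any one message $b_j$ with $j\in R_i$. A PICOD scheme of length $\ell$ over $\mathbb{F}_q$ is an encoding map $\phi:\mathbb{F}_q^m\to\mathbb{F}_q^\ell$ (the $\ell$ broadcast symbols) such that for every client $i$ there is an index $j_i\in R_i$ and a function $\psi_i$ with $\psi_i(\phi(b),(b_k)_{k\in S_i})=b_{j_i}$ for all $b\in\mathbb{F}_q^m$. The PICOD hypergraph $\mathcal{H}$ has vertex set $[m]$ and edge set $\{R_i: i\in[n]\}$; every hypergraph defines a PICOD problem in this way. $\beta_q(\mathcal{H})$ is the minimum length of a PICOD scheme for $\mathcal{H}$ over $\mathbb{F}_q$ (equal to $0$ if there are no edges). For $\mathcal{S}\subseteq\mathcal{V}$,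 $\mathcal{H}[\mathcal{S}]$ is the hypergraph with vertex set $\mathcal{S}$ and edges $\{E\in\mathcal{E}: E\subseteq \mathcal{S}\}$. Two vertices are adjacent if some edge contains both. *)

(* Defs.v *)
From HB Require Import structures.
From mathcomp Require Import all_boot all_algebra all_field.
From mathcomp Require Import boolp.
Set Implicit Arguments. Unset Strict Implicit. Unset Printing Implicit Defensive.
Import GRing.Theory.
Local Open Scope ring_scope.

Section PICOD.
Variables (F : finFieldType) (V : finType).

(* the values (b_k)_{k in A}, encoded as a function that is 0 outside A *)
Definition mask (A : {set V}) (b : {ffun V -> F}) : {ffun V -> F} :=
  [ffun k => if k \in A then b k else 0].

(* A PICOD scheme of length l over F for the hypergraph with vertex set S and
   edge set Es (the messages are b_k, k in S; the encoder only sees b on S;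
   the client with request set E has side information (b_k)_{k in S \ E}). *)
Definition is_picod_scheme (S : {set V}) (Es : {set {set V}}) (l : nat)
    (phi : {ffun V -> F} -> l.-tuple F) : Prop :=
  forall E, E \in Es ->
    exists j, j \in E /\
      exists psi : l.-tuple F -> {ffun V -> F} -> F,
        forall b : {ffun V -> F}, psi (phi (mask S b)) (mask (S :\: E) b) = b j.

Definition has_picod_scheme S Es l : Prop :=
  exists phi : {ffun V -> F} -> l.-tuple F, is_picod_scheme S Es phi.

(* beta_q: minimum length of a PICOD scheme (0 if none exists, which cannot
   happen for genuine PICOD hypergraphs). *)
Definition beta (S : {set V}) (Es : {set {set V}}) : nat :=
  match pselect (exists l, `[< has_picod_scheme S Es l >]) with
  | left H => ex_minn H
  | right _ => 0%N
  end.

Definition induced_edges (Es : {set {set V}}) (S : {set V}) : {set {set V}} :=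
  [set E in Es | E \subset S].

Definition adj (Es : {set {set V}}) : rel V :=
  fun u v => [exists E in Es, (u \in E) && (v \in E)].

Definition components (Es : {set {set V}}) : {set {set V}} :=
  [set [set v | connect (adj Es) u v] | u : V].

End PICOD.

(* Main.v *)
Require Import Defs.
From HB Require Import structures.
From mathcomp Require Import all_boot all_algebra all_field.
From mathcomp Require Import boolp.
Set Implicit Arguments. Unset Strict Implicit. Unset Printing Implicit Defensive.
Import GRing.Theory.

Section Aux.
Variables (F : finFieldType) (V : finType).

Lemma mask_mask (A B : {set V}) (b : {ffun V -> F}) :
  Defs.mask A (Defs.mask B b) = Defs.mask (A :&: B) b.
Proof.
apply/ffunP => k; rewrite !ffunE inE.
by case: (k \in A); case: (k \in B).
Qed.

Lemma beta_le (S : {set V}) Es l : has_picod_scheme F S Es l -> (beta F S Es <= l)%N.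
Proof.
move=> H; rewrite /beta; case: pselect => [ex|nex].
  by case: ex_minnP => m _; apply; apply/asboolP.
by exfalso; apply: nex; exists l; apply/asboolP.
Qed.

Lemma beta_spec (S : {set V}) Es l : has_picod_scheme F S Es l ->
  has_picod_scheme F S Es (beta F S Es).
Proof.
move=> H; rewrite /beta; case: pselect => [ex|nex].
  by case: ex_minnP => m /asboolP.
by exfalso; apply: nex; exists l; apply/asboolP.
Qed.

Lemma has_mono (S : {set V}) Es l l' : has_picod_scheme F S Es l -> (l <= l')%N ->
  has_picod_scheme F S Es l'.
Proof.
move=> [phi Hphi] Hl.
exists (fun b => [tuple nth 0%R (phi b) i | i < l']) => E HE.
have [j [Hj [psi Hpsi]]] := Hphi E HE.
exists j; split => //.
exists (fun t s => psi [tuple nth 0%R t i | i < l] s) => b.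
rewrite -[RHS](Hpsi b); congr psi.
apply: eq_from_tnth => i; rewrite tnth_mktuple.
have := nth_mktuple (fun i : 'I_l' => nth 0%R (phi (Defs.mask S b)) i) 0%R (widen_ord Hl i).
by move=> /= ->; rewrite (tnth_nth 0%R).
Qed.

Lemma has_full (Es : {set {set V}}) : (forall E, E \in Es -> E != set0) ->
  has_picod_scheme F [set: V] Es #|V|.
Proof.
move=> Hne.
exists (fun b => [tuple b (enum_val i) | i < #|V|]) => E HE.
have /set0Pn [j Hj] := Hne E HE.
exists j; split => //.
exists (fun t s => tnth t (enum_rank j)) => b.
by rewrite tnth_mktuple enum_rankK ffunE inE.
Qed.

Lemma has_restrict (Es : {set {set V}}) C l :
  has_picod_scheme F [set: V] Es l ->
  has_picod_scheme F C (induced_edges Es C) l.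
Proof.
move=> [phi Hphi].
exists (fun b => phi (Defs.mask C b)) => E; rewrite inE => /andP [HE HEC].
have [j [Hj [psi Hpsi]]] := Hphi E HE.
exists j; split => //.
exists psi => b.
have := Hpsi (Defs.mask C b).
rewrite !mask_mask setTI setIid ffunE (subsetP HEC _ Hj) => <-.
congr psi; congr Defs.mask.
by rewrite setTD setDE setIC.
Qed.

End Aux.

Section Comp.
Variables (V : finType) (Es : {set {set V}}).

Lemma adj_sym : symmetric (adj Es).
Proof.
move=> u v; rewrite /adj; apply/existsP/existsP => [][E /andP[H1 /andP[H2 H3]]];
  by exists E; rewrite H1 H3 H2.
Qed.

Lemma comp_eq C D x : C \in components Es -> D \in components Es ->
  x \in C -> x \in D -> C = D.
Proof.
move=> /imsetP [u _ ->] /imsetP [w _ ->]; rewrite !inE => Hu Hw.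
have cs := sym_connect_sym adj_sym.
apply/setP => v; rewrite !inE; apply/idP/idP => H.
  apply: connect_trans Hw _; apply: connect_trans _ H; by rewrite cs.
apply: connect_trans Hu _; apply: connect_trans _ H; by rewrite cs.
Qed.

Lemma edge_comp E : E \in Es -> E != set0 ->
  exists2 C, C \in components Es & E \subset C.
Proof.
move=> HE /set0Pn [u Hu].
exists [set v | connect (adj Es) u v]; first by apply/imsetP; exists u.
apply/subsetP => v Hv; rewrite inE; apply: connect1.
by apply/existsP; exists E; rewrite HE Hu Hv.
Qed.

End Comp.

Theorem proposition1 (F : finFieldType) (V : finType) (Es : {set {set V}}) :
  (forall E, E \in Es -> E != set0) ->
  beta F [set: V] Es =
  (\max_(C in components Es) beta F C (induced_edges Es C))%N.
Proof.
move=> Hne.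
set L := (\max_(C in components Es) beta F C (induced_edges Es C))%N.
have Hfull := has_full F Hne.
apply/eqP; rewrite eqn_leq; apply/andP; split; last first.
  apply/bigmax_leqP => C _; apply: beta_le; apply: has_restrict.
  exact: beta_spec Hfull.
apply: beta_le.
have HC : forall C : {set V}, exists phi : {ffun V -> F} -> L.-tuple F,
    C \in components Es -> is_picod_scheme C (induced_edges Es C) phi.
  move=> C; case: (boolP (C \in components Es)) => HCc; last first.
    by exists (fun _ => [tuple 0%R | _ < L]).
  have := has_mono (beta_spec (has_restrict C Hfull))
    (@leq_bigmax_cond _ _ (fun C => beta F C (induced_edges Es C)) C HCc).
  by case=> phi Hphi; exists phi.
have [phiC HphiC] := choice HC.
exists (fun b => [tuple (\sum_(C in components Es) tnth (phiC C (Defs.mask C b)) i)%R | i < L]) => E HE.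
have [C HCc HEC] := edge_comp HE (Hne E HE).
have HEi : E \in induced_edges Es C by rewrite inE HE HEC.
have [j [Hj [psi Hpsi]]] := HphiC C HCc E HEi.
exists j; split => //.
exists (fun t s => psi [tuple (tnth t i - \sum_(D in components Es | D != C)
    tnth (phiC D (Defs.mask D s)) i)%R | i < L] (Defs.mask C s)) => b.
rewrite -[RHS](Hpsi b) mask_mask.
have -> : C :&: ([set: V] :\: E) = C :\: E by rewrite setTD setDE.
congr psi; apply: eq_from_tnth => i; rewrite !tnth_mktuple (bigD1 C HCc) /=.
rewrite mask_mask setIT.
have -> : (\sum_(D in components Es | D != C)
    tnth (phiC D (Defs.mask D (Defs.mask [set: V] b))) i =
    \sum_(D in components Es | D != C)
    tnth (phiC D (Defs.mask D (Defs.mask ([set: V] :\: E) b))) i)%R.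
  apply: eq_bigr => D /andP [HD HDC]; rewrite !mask_mask setIT.
  congr (tnth (phiC D (Defs.mask _ b)) i).
  apply/setP => x; rewrite !inE; case Hx: (x \in D) => //=.
  symmetry; rewrite ?andbT; apply/negP => HxE; move/negP: HDC; apply.
  apply/eqP; exact: (comp_eq HD HCc Hx (subsetP HEC _ HxE)).
by rewrite GRing.addrK.
Qed.
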